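(* Let $g\geq 2$, $h$ and $t$ be integers with $2\leq t\leq \log h/\log g$. Then there exists a partition $\mathbb{N}=W_0\cup\cdots\cup W_{h-1}$ (into pairwise disjoint sets) such that each set $W_r$ ($0\le r\le h-1$) is a union of infinitely many intervals of at least $t$ consecutive integers, and $$A=A_g(W_0)\cup\cdots\cup A_g(W_{h-1})$$ is not a minimal asymptotic basis of order $h$.
   Context: $\mathbb{N}$ denotes the set of all nonnegative integers. For a nonempty $W\subseteq\mathbb{N}$ and an integer $g\ge 2$, $A_g(W)$ is the set of all numbers of the form $\sum_{f\in F}a_f g^f$, where $F$ is a finite nonempty subset of $W$ and $1\le a_f\le g-1$ for each $f\in F$. For $A\subseteq\mathbb{N}$ and $h\ge 2$, let $r_h(A,n)$ be the number of $h$-tuples $(a_1,\dots,a_h)\in A^h$ with $a_1+\cdots+a_h=n$. The set $A$ is an asymptotic basis of order $h$ if $r_h(A,n)\ge 1$ for all sufficiently large integers $n$. An asymptotic basis $A$ of order $h$ is minimal if no proper subset of $A$ is an asymptotic basis of order $h$. *)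

(* Defs.v *)
From mathcomp Require Import all_boot.
Set Implicit Arguments. Unset Strict Implicit. Unset Printing Implicit Defensive.

Definition Ag (g : nat) (W : nat -> Prop) : nat -> Prop :=
  fun n => exists (F : seq nat) (a : nat -> nat),
    [/\ F != [::], uniq F, (forall f, f \in F -> W f),
        (forall f, f \in F -> 1 <= a f <= g - 1)
      & n = \sum_(f <- F) a f * g ^ f].

Definition rep_ge1 (A : nat -> Prop) (h n : nat) : Prop :=
  exists a : 'I_h -> nat, (forall i, A (a i)) /\ \sum_(i < h) a i = n.

Definition asymptotic_basis (A : nat -> Prop) (h : nat) : Prop :=
  exists N, forall n, N <= n -> rep_ge1 A h n.

Definition minimal_asymptotic_basis (A : nat -> Prop) (h : nat) : Prop :=
  asymptotic_basis A h /\
  forall B : nat -> Prop, (forall x, B x -> A x) -> (exists x, A x /\ ~ B x) ->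
    ~ asymptotic_basis B h.

Definition union_inf_intervals (W : nat -> Prop) (t : nat) : Prop :=
  exists I : nat -> nat * nat,
    injective I /\ (forall k, t <= (I k).2) /\
    forall x, W x <-> exists k, (I k).1 <= x < (I k).1 + (I k).2.

(* Main.v *)
Require Import Defs.
From mathcomp Require Import all_boot zify.

Definition num (B : nat) (f : nat -> nat) (m : nat) := \sum_(i < m) f i * B ^ i.

Lemma numS B f m : num B f m.+1 = f 0 + B * num B (fun i => f i.+1) m.
Proof.
rewrite /num big_ord_recl /= expn0 muln1 big_distrr /=; congr (_ + _).
by apply: eq_bigr => i _; rewrite expnS mulnCA.
Qed.

Lemma num0 B f : num B f 0 = 0.
Proof. by rewrite /num big_ord0. Qed.

Lemma num_lt B f m : 0 < B -> (forall i, i < m -> f i < B) -> num B f m < B ^ m.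
Proof.
move=> HB; elim: m f => [|m IH] f Hf; first by rewrite num0.
rewrite numS expnS.
have H1 := IH (fun i => f i.+1) (fun i Hi => Hf i.+1 Hi).
have H2 := Hf 0 (ltn0Sn m).
move: H1 H2; set X := num _ _ _; set Y := B ^ m => H1 H2. nia.
Qed.

Lemma num_dB B f m i : 1 < B -> (forall j, j < m -> f j < B) ->
  num B f m %/ B ^ i %% B = if i < m then f i else 0.
Proof.
move=> HB; elim: m f i => [|m IH] f i Hf; first by rewrite num0 div0n mod0n.
rewrite numS; case: i => [|i].
  rewrite expn0 divn1 addnC mulnC modnMDl modn_small //; exact: Hf.
rewrite expnS divnMA addnC mulnC divnMDl ?(ltnW HB) // (divn_small (Hf 0 (ltn0Sn m))) addn0.
rewrite IH ?ltnS // => j Hj; exact: Hf.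
Qed.

Lemma num_expand B n m : 1 < B -> n < B ^ m -> num B (fun i => n %/ B ^ i %% B) m = n.
Proof.
move=> HB; elim: m n => [|m IH] n Hn.
  by rewrite num0; move: Hn; rewrite expn0; case: n.
rewrite numS expn0 divn1.
have -> : num B (fun i => n %/ B ^ i.+1 %% B) m = num B (fun i => (n %/ B) %/ B ^ i %% B) m.
  by apply: eq_bigr => i _; rewrite expnS divnMA.
rewrite IH; last by rewrite ltn_divLR ?(ltnW HB) // -expnSr.
by rewrite mulnC addnC -divn_eq.
Qed.

Lemma num_add B f f' m : num B f m + num B f' m = num B (fun i => f i + f' i) m.
Proof. by rewrite /num -big_split; apply: eq_bigr => i _; rewrite mulnDl. Qed.

Lemma num_sumj B (F : nat -> nat -> nat) m h :
  \sum_(j < h) num B (F j) m = num B (fun i => \sum_(j < h) F j i) m.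
Proof.
rewrite /num exchange_big; apply: eq_bigr => i _; by rewrite big_distrl.
Qed.

Lemma num_single B m i0 w : i0 < m -> num B (fun i => (i == i0) * w) m = w * B ^ i0.
Proof.
move=> Hi; rewrite /num (bigD1 (Ordinal Hi)) //= eqxx mul1n big1 ?addn0 //.
move=> i Hne; suff -> : (nat_of_ord i == i0) = false by rewrite mul0n.
apply/negbTE; apply: contra Hne => /eqP Hv; apply/eqP; exact: val_inj.
Qed.

Lemma num_ge B f m i : i < m -> f i * B ^ i <= num B f m.
Proof. move=> Hi; by rewrite /num (bigD1 (Ordinal Hi)) //= leq_addr. Qed.

Lemma num_dvd d B f m : (forall i, d %| f i) -> d %| num B f m.
Proof. move=> H; apply: dvdn_sum => i _; exact: dvdn_mulr. Qed.

Lemma sum_lt_min r h : \sum_(j < h) (j < r) = minn r h.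
Proof.
elim: h => [|h IH]; first by rewrite big_ord0 minn0.
rewrite big_ord_recr /= IH. case: (ltnP h r) => H /=.
  by rewrite (minn_idPr H) addn1.
by rewrite addn0 (minn_idPl (leq_trans H (leqnSn h))).
Qed.

Lemma split_sum v h : 0 < h -> \sum_(j < h) (v %/ h + (j < v %% h)) = v.
Proof.
move=> Hh; rewrite big_split /= sum_nat_const card_ord sum_lt_min.
have := ltn_pmod v Hh => H; rewrite (minn_idPl (ltnW H)).
by rewrite mulnC -divn_eq.
Qed.

Lemma split_bound v h X j : 0 < h -> 0 < X -> v <= h * (X - 1) -> v %/ h + (j < v %% h) < X.
Proof.
move=> Hh HX Hv; have := divn_eq v h; have := ltn_pmod v Hh.
set q := v %/ h; set r := v %% h => Hr Hvq.
case: (ltnP j r) => Hj /=.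
  have Hq : q * h < h * (X - 1) by lia.
  have : q < X - 1 by rewrite -(ltn_pmul2r Hh) mulnC; lia.
  lia.
rewrite ?addn0.
have Hq : q * h <= h * (X - 1) by lia.
have : q <= X - 1 by rewrite -(leq_pmul2r Hh) [(X-1)*h]mulnC.
lia.
Qed.

Definition dig (g x p : nat) := x %/ g ^ p %% g.

Lemma Ag_of_digits g (W : nat -> Prop) x : 1 < g -> 0 < x ->
  (forall p, dig g x p != 0 -> W p) -> Ag g W x.
Proof.
move=> Hg Hx HW.
have Hexp : num g (fun i => x %/ g ^ i %% g) x = x by apply: num_expand => //; exact: ltn_expl.
have Hsum : x = \sum_(f <- [seq p <- iota 0 x | dig g x p != 0]) dig g x f * g ^ f.
  rewrite big_filter big_mkcond /=.
  have -> : iota 0 x = index_iota 0 x by rewrite /index_iota subn0.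
  rewrite big_mkord -{1}Hexp /num.
  apply: eq_bigr => p _; rewrite /dig; case: eqP => // ->; by rewrite mul0n.
exists [seq p <- iota 0 x | dig g x p != 0], (dig g x); split.
- apply/eqP => HF; move: Hsum; rewrite HF big_nil => Hx0; by rewrite Hx0 in Hx.
- apply: filter_uniq; exact: iota_uniq.
- by move=> f; rewrite mem_filter => /andP [H _]; apply: HW.
- move=> f; rewrite mem_filter => /andP [H _]; rewrite lt0n H /=.
  have : dig g x f < g by apply: ltn_pmod; lia.
  lia.
- exact: Hsum.
Qed.

Lemma dig_block g K x i q : 0 < g -> q < K ->
  dig g x (i * K + q) = dig g (x %/ (g ^ K) ^ i %% g ^ K) q.
Proof.
move=> Hg HqK; rewrite /dig.
have -> : g ^ (i * K + q) = (g ^ K) ^ i * g ^ q by rewrite expnD (mulnC i K) expnM.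
rewrite divnMA.
set y := x %/ (g ^ K) ^ i.
rewrite {1}(divn_eq y (g ^ K)).
set c := y %/ g ^ K; set r := y %% g ^ K.
have -> : g ^ K = g ^ (K - q).-1 * g * g ^ q.
  by rewrite -expnSr prednK ?subn_gt0 // -expnD subnK // ltnW.
rewrite mulnA divnMDl ?expn_gt0 ?Hg //.
by rewrite mulnA modnMDl.
Qed.

Lemma dig_lt_pow g w q : w < g ^ q -> dig g w q = 0.
Proof. by move=> H; rewrite /dig divn_small ?mod0n. Qed.

Lemma dig_dvd_pow g k w q : 0 < g -> q < k -> g ^ k %| w -> dig g w q = 0.
Proof.
move=> Hg Hq /dvdnP [c ->]; rewrite /dig.
have -> : g ^ k = g ^ (k - q).-1 * g * g ^ q.
  by rewrite -expnSr prednK ?subn_gt0 // -expnD subnK // ltnW.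
by rewrite mulnA mulnK ?expn_gt0 ?Hg // mulnA modnMl.
Qed.

Definition cls (h k K p : nat) := if p %% K < k then 0 else (p %/ K) %% h.-1 + 1.

Lemma Ag_cls0 g h k K x : 1 < g -> 0 < k -> k <= K -> 0 < x ->
  (forall i, x %/ (g ^ K) ^ i %% g ^ K < g ^ k) ->
  Ag g (fun p => cls h k K p = 0) x.
Proof.
move=> Hg Hk HkK Hx Hb; apply: Ag_of_digits => // p Hp.
rewrite /cls; case: ifP => // Hq; exfalso.
have HK : 0 < K by lia.
move: Hp; rewrite (divn_eq p K) dig_block ?ltn_pmod //; [|lia].
rewrite dig_lt_pow ?eqxx //.
apply: (leq_trans (Hb _)); apply: leq_pexp2l; [lia|].
by rewrite leqNgt Hq.
Qed.

Lemma Ag_clss g h k K s x : 1 < g -> 0 < k -> k <= K -> 0 < x ->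
  (forall i, g ^ k %| x %/ (g ^ K) ^ i %% g ^ K) ->
  (forall i, x %/ (g ^ K) ^ i %% g ^ K != 0 -> i %% h.-1 + 1 = s) ->
  Ag g (fun p => cls h k K p = s) x.
Proof.
move=> Hg Hk HkK Hx Hd Hc; apply: Ag_of_digits => // p Hp.
have HK : 0 < K by lia.
move: Hp; rewrite (divn_eq p K) dig_block ?ltn_pmod //; [|lia].
rewrite /cls modnMDl modn_mod divnMDl // (divn_small (ltn_pmod p HK)) addn0.
case: ifP => Hq.
  rewrite (@dig_dvd_pow g k) ?eqxx ?Hd //; lia.
move=> Hne; apply: Hc; apply: contra Hne => /eqP ->.
by rewrite /dig div0n mod0n.
Qed.

Lemma num_ext B f f' m : (forall i, i < m -> f i = f' i) -> num B f m = num B f' m.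
Proof. move=> H; apply: eq_bigr => i _; by rewrite H. Qed.

Lemma sum_ord_shift (F : nat -> nat) h : 0 < h ->
  \sum_(j < h) F j = F 0 + \sum_(j < h.-1) F j.+1.
Proof. by case: h => // h _; rewrite big_ord_recl. Qed.

Lemma sum_indicator m a w : a < m ->
  \sum_(j < m) (if a + 1 == j.+1 then w else 0) = w.
Proof.
move=> Ha; rewrite (bigD1 (Ordinal Ha)) //= addn1 eqxx big1 ?addn0 // => j Hj.
rewrite eqSS; case: eqP => // Heq; exfalso; move/eqP: Hj; apply.
by apply: val_inj => /=.
Qed.


Lemma params g h t : 1 < g -> 1 < t -> g ^ t <= h ->
  [/\ 4 <= h, g <= g ^ t, h < g ^ h, g * (h + 1) <= g ^ (t + h)
    & (h.-1) * g + 2 <= g ^ (t + h) - g ^ t].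
Proof.
move=> Hg Ht Hh.
have Hgt : g ^ 2 <= g ^ t by apply: leq_pexp2l; lia.
have H4 : 4 <= g ^ 2 by rewrite expnS expn1; nia.
have Hgt1 : g <= g ^ t by rewrite -{1}(expn1 g); apply: leq_pexp2l; lia.
have Hgh : h < g ^ h by apply: ltn_expl.
have HX : g ^ t * (h + 1) <= g ^ (t + h) by rewrite expnD leq_mul2l addn1 Hgh orbT.
have HX2 : g * (h + 1) <= g ^ t * (h + 1) by rewrite leq_mul2r Hgt1 orbT.
split => //; first lia; first lia.
have E1 : g ^ t * (h + 1) = g ^ t * h + g ^ t by rewrite mulnDr muln1.
have E2 : g * h <= g ^ t * h by rewrite leq_mul2r Hgt1 orbT.
have E3 : h.-1 * g + g = g * h by rewrite mulnC -mulnSr prednK //; lia.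
lia.
Qed.

Lemma caseA g h t n (i0 : 'I_n) : 1 < g -> 1 < t -> g ^ t <= h ->
  let k := t + h in let K := k + t in let G := g ^ K in let X := g ^ k in
  let v := fun i => n %/ G ^ i %% G in
  h * (X - 1) < v i0 ->
  rep_ge1 (fun x => (exists r, r < h /\ Ag g (fun p => cls h k K p = r) x) /\ x <> 1) h n.
Proof.
move=> Hg Ht Hh k K G X v Hi0.
have [Hh4 Hgt1 Hgh HgX Hbnd] := @params g h t Hg Ht Hh.
have Hg0 : 0 < g by lia.
have HGX : G = X * g ^ t by rewrite /G /K expnD.
have HX2 : g < X.
  rewrite /X /k; apply: leq_trans HgX; rewrite -[X in X < _]muln1 ltn_pmul2l; lia.
have HG2 : 1 < G.
  rewrite HGX; apply: (@leq_trans X); [lia | apply: leq_pmulr; by rewrite expn_gt0 Hg0].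
have HG0 : 0 < G by lia.
have Hk0 : 0 < k by rewrite /k; lia.
have HkK : k <= K by rewrite /K; lia.
have Hn_lt : n < G ^ n by apply: ltn_expl.
have Hnum : num G v n = n by apply: num_expand.
have Hv_lt : forall i, v i < G by move=> i; apply: ltn_pmod.
have Hmod : X - g ^ t < v i0 %% X.
  have E := divn_eq (v i0) X.
  have Hq : v i0 %/ X < g ^ t.
    rewrite ltn_divLR; last lia.
    rewrite mulnC -HGX; exact: Hv_lt.
  move: Hi0 E Hq; set w := v i0; set q := w %/ X; set r := w %% X; set a := g ^ t.
  move=> H1 E Hq.
  have M1 : a * (X - 1) <= h * (X - 1) by rewrite leq_mul2r Hh orbT.
  have M2 : q.+1 * X <= a * X by rewrite leq_mul2r Hq orbT.
  have M3 : a <= a * X by apply: leq_pmulr; lia.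
  have M4 : a <= X by rewrite /a /X /k; apply: leq_pexp2l; lia.
  move: M1 M2; rewrite mulnBr muln1 mulSn; lia.
pose P := fun s => num G (fun i => if i %% h.-1 + 1 == s then v i - v i %% X else 0) n.
pose z := fun s => nat_of_bool (P s == 0).
pose Z := \sum_(j < h.-1) z j.+1.
pose u := g * G ^ i0.
pose R := num G (fun i => v i %% X - (i == i0) * (Z * g)) n.
have HZ : Z <= h.-1.
  apply: (@leq_trans (\sum_(j < h.-1) 1)); last by rewrite sum_nat_const card_ord muln1.
  by apply: leq_sum => j _; rewrite /z; case: (P _ == 0).
have Hbig : Z * g + 2 <= v i0 %% X.
  have : Z * g <= h.-1 * g by rewrite leq_mul2r HZ orbT.
  move: Hbnd Hmod; rewrite /X /k; lia.
have HvX : forall i, v i %% X < X by move=> i; apply: ltn_pmod; lia.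
have HXG : X <= G by rewrite HGX; apply: leq_pmulr; rewrite expn_gt0 Hg0.
have HRf : forall i, v i %% X - (i == i0) * (Z * g) < G.
  move=> i; apply: leq_ltn_trans (leq_subr _ _) _; exact: leq_trans (HvX i) HXG.
have HR2 : 2 <= R.
  apply: (leq_trans _ (num_ge G (fun i => v i %% X - (i == i0) * (Z * g)) n i0 (ltn_ord i0))).
  rewrite eqxx mul1n.
  apply: (leq_trans _ (leq_pmulr _ _)); last by rewrite expn_gt0 HG0.
  lia.
have Hu : u = num G (fun i => (i == i0) * g) n by rewrite num_single.
have HP : forall s, 0 < s -> s < h -> P s <> 0 -> P s <> 1 /\ Ag g (fun p => cls h k K p = s) (P s).
  move=> s Hs0 Hsh HPs.
  have Hf : forall j, j < n -> (if j %% h.-1 + 1 == s then v j - v j %% X else 0) < G.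
    move=> j _; case: ifP => _ //; apply: leq_ltn_trans (leq_subr _ _) (Hv_lt j).
  have Hdv : forall i, X %| (if i %% h.-1 + 1 == s then v i - v i %% X else 0).
    move=> i; case: ifP => _ //; rewrite {1}(divn_eq (v i) X) addnK; exact: dvdn_mull.
  have HXP : X %| P s by apply: num_dvd.
  have HP0 : 0 < P s by rewrite lt0n; apply/eqP.
  split.
    move=> HP1; have := dvdn_leq HP0 HXP; rewrite HP1; lia.
  apply: Ag_clss => //.
    move=> i; rewrite /G num_dB // -/G; case: (i < n) => //; exact: Hdv.
  move=> i; rewrite /G num_dB // -/G; case: (i < n) => //.
  by case: ifP => [/eqP -> | _]; rewrite ?eqxx.
exists (fun j : 'I_h => (fun j => if j is j'.+1 then P j + z j * u else R) (nat_of_ord j)).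
split.
- move=> [j Hj] /=; case: j Hj => [|j] Hj.
    split; last by lia.
    exists 0; split; first lia.
    apply: Ag_cls0 => //; first lia.
    move=> i; rewrite /G num_dB // -/G; case: (i < n) => //; last by lia.
    apply: leq_ltn_trans (leq_subr _ _) (HvX i).
  rewrite /z; case: (boolP (P j.+1 == 0)) => HPz /=.
    rewrite (eqP HPz) add0n mul1n; split; last first.
      rewrite /u => Hu1; have : g <= g * G ^ i0 by apply: leq_pmulr; rewrite expn_gt0 HG0.
      rewrite Hu1; lia.
    exists 0; split; first lia.
    apply: Ag_cls0 => //.
      by rewrite /u muln_gt0 expn_gt0 HG0; lia.
    move=> i; rewrite Hu /G num_dB // -/G; first by case: (i < n) => //; case: (i == i0) => /=; lia.
    by move=> j0 _; case: (j0 == i0) => /=; lia.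
  have HPn : P j.+1 <> 0 by move=> E; rewrite E in HPz.
  rewrite ?mul0n ?addn0; have [H1 H2] := HP j.+1 (ltn0Sn j) Hj HPn.
  split => //; exists j.+1; split => //.
rewrite (sum_ord_shift (fun j => if j is j'.+1 then P j + z j * u else R)); last lia.
rewrite big_split /= -big_distrl /= -/Z.
have HsumP : \sum_(j < h.-1) P j.+1 = num G (fun i => v i - v i %% X) n.
  rewrite /P (num_sumj G (fun j i => if i %% h.-1 + 1 == j.+1 then v i - v i %% X else 0)).
  apply: num_ext => i _; apply: sum_indicator; apply: ltn_pmod; lia.
have HZu : Z * u = num G (fun i => (i == i0) * (Z * g)) n by rewrite num_single // /u mulnA.
rewrite HsumP HZu [X in R + X]addnC addnA /R !num_add.
apply: (etrans _ Hnum); apply: num_ext => i _.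
rewrite subnK; first by rewrite subnKC // leq_mod.
case: (eqVneq i i0) => [-> | Hne] /=; first by rewrite mul1n; lia.
by rewrite mul0n.
Qed.

Lemma caseB g h t n (i1 : 'I_n) : 1 < g -> 1 < t -> g ^ t <= h ->
  let k := t + h in let K := k + t in let G := g ^ K in let X := g ^ k in
  let v := fun i => n %/ G ^ i %% G in
  (forall i, i < n -> v i <= h * (X - 1)) ->
  h <= v i1 -> (0 < i1) || (2 * h <= v i1) ->
  rep_ge1 (fun x => (exists r, r < h /\ Ag g (fun p => cls h k K p = r) x) /\ x <> 1) h n.
Proof.
move=> Hg Ht Hh k K G X v HD Hi1 Hi1'.
have [Hh4 Hgt1 Hgh HgX Hbnd] := @params g h t Hg Ht Hh.
have Hg0 : 0 < g by lia.
have HGX : G = X * g ^ t by rewrite /G /K expnD.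
have HX2 : g < X.
  rewrite /X /k; apply: leq_trans HgX; rewrite -[X in X < _]muln1 ltn_pmul2l; lia.
have HG2 : 1 < G.
  rewrite HGX; apply: (@leq_trans X); [lia | apply: leq_pmulr; by rewrite expn_gt0 Hg0].
have HG0 : 0 < G by lia.
have Hk0 : 0 < k by rewrite /k; lia.
have HkK : k <= K by rewrite /K; lia.
have Hn_lt : n < G ^ n by apply: ltn_expl.
have Hnum : num G v n = n by apply: num_expand.
have HXG : X <= G by rewrite HGX; apply: leq_pmulr; rewrite expn_gt0 Hg0.
have Hh0 : 0 < h by lia.
pose f := fun j i => v i %/ h + (j < v i %% h).
have Hf : forall j i, i < n -> f j i < X.
  by move=> j i Hi; apply: split_bound => //; [lia | exact: HD].
exists (fun j : 'I_h => num G (f j) n); split.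
- move=> j; have H2 : 2 <= num G (f j) n.
    apply: (leq_trans _ (num_ge G (f j) n i1 (ltn_ord i1))).
    have Hq : 1 <= v i1 %/ h by rewrite leq_divRL // mul1n.
    case/orP: Hi1' => Hc.
      have : G <= G ^ i1.
        rewrite -{1}(expn1 G); exact: (leq_pexp2l HG0 Hc).
      have : 1 <= f j i1 by rewrite /f; lia.
      move=> A B; apply: (leq_trans _ (leq_mul A B)); lia.
    have A2 : 2 <= v i1 %/ h by rewrite leq_divRL.
    have A : 2 <= f j i1 by rewrite /f; lia.
    apply: (leq_trans A); apply: leq_pmulr; by rewrite expn_gt0 HG0.
  split; last by lia.
  exists 0; split; first lia.
  apply: Ag_cls0 => //; first lia.
  move=> i; rewrite /G num_dB // -/G; first by case: ifP => // Hi; [exact: Hf | lia].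
  move=> j0 Hj0; exact: leq_trans (Hf j j0 Hj0) HXG.
- rewrite (num_sumj G f n h); apply: (etrans _ Hnum); apply: num_ext => i _.
  by rewrite /f split_sum.
Qed.

Lemma caseC g h t n : 1 < g -> 1 < t -> g ^ t <= h ->
  let k := t + h in let K := k + t in let G := g ^ K in let X := g ^ k in
  let v := fun i => n %/ G ^ i %% G in
  (forall i, i < n -> v i <= h * (X - 1)) ->
  (forall i, i < n -> ~~ ((h <= v i) && ((0 < i) || (2 * h <= v i)))) ->
  G ^ 2 <= n ->
  rep_ge1 (fun x => (exists r, r < h /\ Ag g (fun p => cls h k K p = r) x) /\ x <> 1) h n.
Proof.
move=> Hg Ht Hh k K G X v HD HnB Hn2.
have [Hh4 Hgt1 Hgh HgX Hbnd] := @params g h t Hg Ht Hh.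
have Hg0 : 0 < g by lia.
have HGX : G = X * g ^ t by rewrite /G /K expnD.
have HX2 : g < X.
  rewrite /X /k; apply: leq_trans HgX; rewrite -[X in X < _]muln1 ltn_pmul2l; lia.
have HG2 : 1 < G.
  rewrite HGX; apply: (@leq_trans X); [lia | apply: leq_pmulr; by rewrite expn_gt0 Hg0].
have HG0 : 0 < G by lia.
have Hk0 : 0 < k by rewrite /k; lia.
have HkK : k <= K by rewrite /K; lia.
have Hn_lt : n < G ^ n by apply: ltn_expl.
have Hnum : num G v n = n by apply: num_expand.
have HXG : X <= G by rewrite HGX; apply: leq_pmulr; rewrite expn_gt0 Hg0.
have Hh0 : 0 < h by lia.
have HXh : 2 * h + 2 <= X.
  have : g * (h + 1) <= X by [].
  have : 2 * (h + 1) <= g * (h + 1) by rewrite leq_mul2r; lia.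
  lia.
have HXb : X + 2 * h <= h.-1 * (X - 1).
  have : 3 * (X - 1) <= h.-1 * (X - 1) by rewrite leq_mul2r; lia.
  lia.
have Hvlarge : forall i, n <= i -> v i = 0.
  move=> i Hi; rewrite /v divn_small ?mod0n //.
  apply: (leq_trans Hn_lt); exact: leq_pexp2l.
have [M [HM2 HMn HvM]] : exists M, [/\ 2 <= M, M < n & 0 < v M].
  pose n' := n %/ G ^ 2.
  have Hn'0 : 0 < n' by rewrite /n' divn_gt0 // expn_gt0 HG0.
  have Hn'lt : n' < G ^ n by apply: leq_ltn_trans (leq_div _ _) Hn_lt.
  have Hexp := num_expand G n' n HG2 Hn'lt.
  case: (boolP [exists i : 'I_n, n' %/ G ^ i %% G != 0]).
    move=> /existsP [i Hi]; exists i.+2.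
    have Hv : v i.+2 = n' %/ G ^ i %% G by rewrite /v /n' -divnMA -expnD addnC addn2.
    have Hpos : 0 < v i.+2 by rewrite Hv lt0n.
    split => //.
    by rewrite ltnNge; apply/negP => Hle; rewrite Hvlarge in Hpos.
  move=> /existsPn Hall; exfalso; move: Hn'0; rewrite -Hexp /num big1 // => i _.
  by move/negPn: (Hall i) => /eqP ->.
pose h' := h.-1.
have Hh'0 : 0 < h' by rewrite /h'; lia.
pose v' := fun i => v i - (i == M) + (i == M.-1) * X.
pose Y := (g ^ t - 1) * X * G ^ M.-1.
pose T := fun j => num G (fun i => v' i %/ h' + (j < v' i %% h')) n.
have HM1n : M.-1 < n by lia.
have Hv'b : forall i, i < n -> v' i <= h' * (X - 1).
  move=> i Hi; have := HnB i Hi; have := HD i Hi; rewrite /v'.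
  case: (eqVneq i M) => [-> | HiM] /=.
    rewrite (_ : (M == M.-1) = false) /=; last by apply/eqP; lia.
    rewrite /h'; lia.
  case: (eqVneq i M.-1) => [-> | HiM1] /=.
    rewrite /h'; lia.
  rewrite /h'; case: i Hi HiM HiM1 => [|i] /=; lia.
have Hf : forall j i, i < n -> v' i %/ h' + (j < v' i %% h') < X.
  by move=> j i Hi; apply: split_bound => //; [lia | exact: Hv'b].
have HvM1 : X <= v' M.-1.
  rewrite /v' (_ : (M.-1 == M) = false); last by apply/eqP; lia.
  rewrite eqxx /=; lia.
exists (fun j : 'I_h => (fun j => if j is j'.+1 then T j' else Y) (nat_of_ord j)); split.
- move=> [j Hj] /=; case: j Hj => [|j] Hj.
    have HYw : (g ^ t - 1) * X < G by rewrite HGX mulnC ltn_pmul2l; lia.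
    have HYe : Y = num G (fun i => (i == M.-1) * ((g ^ t - 1) * X)) n by rewrite num_single.
    have HY2 : 2 <= Y.
      rewrite /Y; apply: (@leq_trans X); first lia.
      rewrite -mulnA; apply: (@leq_trans ((g ^ t - 1) * X)); first by apply: leq_pmull; lia.
      apply: leq_mul => //; apply: leq_pmulr; by rewrite expn_gt0 HG0.
    split; last by lia.
    exists (M.-1 %% h.-1 + 1); split.
      have : M.-1 %% h.-1 < h.-1 by apply: ltn_pmod; lia.
      lia.
    rewrite HYe; apply: Ag_clss => //; first by rewrite -HYe; lia.
      move=> i; rewrite /G num_dB // -/G; last by move=> j0 _; case: (j0 == M.-1) => /=; lia.
      case: (i < n) => //; apply: dvdn_mull; exact: dvdn_mull.
    move=> i; rewrite /G num_dB // -/G; last by move=> j0 _; case: (j0 == M.-1) => /=; lia.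
    case: (i < n) => //; case: (eqVneq i M.-1) => [-> | _] //=.
  have HT2 : 2 <= T j.
    apply: (leq_trans _ (num_ge G _ n M.-1 HM1n)).
    have A : 1 <= v' M.-1 %/ h' by rewrite leq_divRL // mul1n; rewrite /h'; lia.
    have B : G <= G ^ M.-1 by rewrite -{1}(expn1 G); apply: (leq_pexp2l HG0); lia.
    apply: (@leq_trans (1 * G)); first lia.
    apply: leq_mul => //; lia.
  split; last by lia.
  exists 0; split; first lia.
  apply: Ag_cls0 => //; first lia.
  move=> i; rewrite /G num_dB // -/G; first by case: ifP => // Hi; [exact: Hf | lia].
  move=> j0 Hj0; exact: leq_trans (Hf j j0 Hj0) HXG.
- rewrite (sum_ord_shift (fun j => if j is j'.+1 then T j' else Y)); last lia.
  rewrite /= -/h' /T (num_sumj G (fun j i => v' i %/ h' + (j < v' i %% h')) n h').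
  have -> : num G (fun i => \sum_(j < h') (v' i %/ h' + (j < v' i %% h'))) n = num G v' n.
    by apply: num_ext => i _; rewrite split_sum.
  have E1 : num G v' n + G ^ M = n + X * G ^ M.-1.
    rewrite -[G ^ M]mul1n -(num_single G n M 1) //.
    rewrite -(num_single G n M.-1 X) // num_add.
    transitivity (num G v n + num G (fun i => (i == M.-1) * X) n); last by rewrite Hnum.
    rewrite num_add; apply: num_ext => i _; rewrite /v'.
    case: (eqVneq i M) => [-> | HiM] /=; last by rewrite mul0n subn0 addn0.
    rewrite (_ : (M == M.-1) = false) /=; last by apply/eqP; lia.
    lia.
  have E2 : Y + X * G ^ M.-1 = G ^ M.
    rewrite /Y -mulnA -[X in _ + X]mul1n -mulnDl subnK; last by rewrite expn_gt0 Hg0.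
    by rewrite mulnA [g ^ t * X]mulnC -HGX -expnS prednK //; lia.
  apply/eqP; rewrite -(eqn_add2r (X * G ^ M.-1)) addnAC E2 addnC E1.
  by [].
Qed.

Lemma cls_lt h k K p : 1 < h -> cls h k K p < h.
Proof.
move=> Hh; rewrite /cls; case: ifP => _; first lia.
have : (p %/ K) %% h.-1 < h.-1 by apply: ltn_pmod; lia.
lia.
Qed.

Lemma cls_block h k K i q : 0 < K -> q < K ->
  cls h k K (i * K + q) = if q < k then 0 else i %% h.-1 + 1.
Proof.
move=> HK HqK; rewrite /cls modnMDl (modn_small HqK) divnMDl // (divn_small HqK) addn0.
by [].
Qed.

Lemma intervals h k K t r : 1 < h -> 0 < k -> K = k + t -> t <= k -> r < h ->
  union_inf_intervals (fun p => cls h k K p = r) t.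
Proof.
move=> Hh Hk HK Htk Hr.
have HK0 : 0 < K by lia.
case: r Hr => [|s] Hs.
  exists (fun i => (i * K, k)); split; [|split].
  - by move=> i j /= [] /eqP; rewrite eqn_pmul2r // => /eqP.
  - by move=> i.
  - move=> x /=; split.
      rewrite {1}(divn_eq x K) cls_block ?ltn_pmod //.
      case: ifP => Hq H0; last by lia.
      exists (x %/ K); have := divn_eq x K; lia.
    move=> [i Hi]; have -> : x = i * K + (x - i * K) by lia.
    rewrite cls_block //; last by lia.
    by case: ifP => //; lia.
pose h' := h.-1.
have Hh' : 0 < h' by rewrite /h'; lia.
have Hsh : s < h' by rewrite /h'; lia.
exists (fun j => ((s + h' * j) * K + k, t)); split; [|split].
- move=> i j /= [] /eqP; rewrite eqn_add2r eqn_pmul2r // eqn_add2l eqn_pmul2l //.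
  by move/eqP.
- by move=> i.
- move=> x /=; split.
    rewrite {1}(divn_eq x K) cls_block ?ltn_pmod //.
    case: ifP => // Hq E.
    exists ((x %/ K) %/ h').
    have E1 := divn_eq (x %/ K) h'.
    have E2 : (x %/ K) %% h' = s by rewrite /h'; lia.
    have -> : s + h' * (x %/ K %/ h') = x %/ K by rewrite mulnC -E2 addnC -E1.
    have := divn_eq x K; have := ltn_pmod x HK0; lia.
  move=> [j Hj]; have -> : x = (s + h' * j) * K + (x - (s + h' * j) * K) by lia.
  rewrite cls_block //; last by lia.
  case: ifP; first by lia.
  by rewrite -/h' [s + _]addnC [h' * j]mulnC modnMDl modn_small // addn1.
Qed.

Theorem theorem1 (g h t : nat) :
  2 <= g -> 2 <= t -> g ^ t <= h ->
  exists W : nat -> nat -> Prop,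
    (forall n, exists r, r < h /\ W r n) /\
    (forall r1 r2 n, r1 < h -> r2 < h -> W r1 n -> W r2 n -> r1 = r2) /\
    (forall r, r < h -> union_inf_intervals (W r) t) /\
    ~ minimal_asymptotic_basis (fun n => exists r, r < h /\ Ag g (W r) n) h.
Proof.
move=> Hg Ht Hh.
have [Hh4 _ _ _ _] := @params g h t Hg Ht Hh.
pose k := t + h. pose K := k + t.
exists (fun r p => cls h k K p = r).
split; [|split; [|split]].
- move=> p; exists (cls h k K p); split => //; apply: cls_lt; lia.
- by move=> r1 r2 p _ _ <- <-.
- move=> r Hr; apply: intervals => //; rewrite /k; lia.
- move=> [Hbas Hmin].
  apply: (Hmin (fun x => (exists r, r < h /\ Ag g (fun p => cls h k K p = r) x) /\ x <> 1)).
  + by move=> x [].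
  + exists 1; split; last by case.
    exists 0; split; first lia.
    exists [:: 0], (fun _ => 1); split => //.
    * move=> f; rewrite inE => /eqP ->; rewrite /cls mod0n.
      by case: ifP => //; rewrite /k; lia.
    * move=> f _; lia.
    * by rewrite big_cons big_nil expn0.
  + exists ((g ^ K) ^ 2) => n Hn.
    case: (boolP [exists i : 'I_n, h * (g ^ k - 1) < n %/ (g ^ K) ^ i %% g ^ K]).
      move=> /existsP [i0 Hi0]; exact: (@caseA g h t n i0 Hg Ht Hh Hi0).
    move=> /existsPn Hall.
    have HD : forall i, i < n -> n %/ (g ^ K) ^ i %% g ^ K <= h * (g ^ k - 1).
      by move=> i Hi; have := Hall (Ordinal Hi); rewrite -leqNgt.
    case: (boolP [exists i : 'I_n, (h <= n %/ (g ^ K) ^ i %% g ^ K) &&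
                                   ((0 < i) || (2 * h <= n %/ (g ^ K) ^ i %% g ^ K))]).
      move=> /existsP [i1 /andP [H1 H2]]; exact: (@caseB g h t n i1 Hg Ht Hh HD H1 H2).
    move=> /existsPn HnB'.
    apply: (@caseC g h t n Hg Ht Hh HD) => //.
    by move=> i Hi; exact: (HnB' (Ordinal Hi)).
Qed.
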